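(* Let $n$ be odd and $f:\mathbb{F}_{2^n}\to\mathbb{F}_{2^n}$ be almost bent, and let $k=\max\{\omega(a): a\in\mathbb{F}_{2^n}\}$. Then \[|\mathrm{Im}(f)|\leq 2^n-\frac{k-1}{k}2^{(n+1)/2}.\] In particular, if $f$ is not a permutation, then $|\mathrm{Im}(f)|\leq 2^n-2^{(n-1)/2}$.
   Context: $\mathrm{Tr}$ is the absolute trace, $W_f(b,a)=\sum_{x}(-1)^{\mathrm{Tr}(bf(x)+ax)}$. For $n$ odd, $f$ is almost bent if $W_f(b,a)\in\{0,\pm2^{(n+1)/2}\}$ for all $b\in\mathbb{F}_{2^n}^*$, $a\in\mathbb{F}_{2^n}$. $\omega(a)=|f^{-1}(\{a\})|$. *)

(* Defs.v *)
(* F_{2^n} is modelled as an arbitrary finite field F of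
   characteristic 2 with #|F| = 2^n. *)
From mathcomp Require Import all_boot all_order all_algebra all_field.
Set Implicit Arguments. Unset Strict Implicit. Unset Printing Implicit Defensive.
Import Order.TTheory GRing.Theory Num.Theory.
Local Open Scope ring_scope.

Definition absTr (F : finFieldType) (n : nat) (x : F) : F :=
  \sum_(i < n) x ^+ (2 ^ i).

(* (-1)^{Tr y} as an integer; Tr y is 0 or 1 in F_2 *)
Definition sgnTr (F : finFieldType) (n : nat) (y : F) : int :=
  if absTr n y == 0 then 1 else -1.

Definition walsh (F : finFieldType) (n : nat) (f : F -> F) (b a : F) : int :=
  \sum_(x : F) sgnTr n (b * f x + a * x).

Definition almost_bent (F : finFieldType) (n : nat) (f : F -> F) : Prop :=
  forall b a : F, b != 0 ->
    walsh n f b a \in [:: 0; (2 ^ ((n + 1) %/ 2))%:Z; - (2 ^ ((n + 1) %/ 2))%:Z].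

Definition omega (F : finFieldType) (f : F -> F) (a : F) : nat :=
  #|[set x | f x == a]|.

Definition imf (F : finFieldType) (f : F -> F) : {set F} := [set f x | x in F].

(* Main.v *)
Require Import Defs.
From mathcomp Require Import all_boot all_order all_algebra all_field zify.
Import Order.TTheory GRing.Theory Num.Theory.
Local Open Scope ring_scope.
Set Implicit Arguments. Unset Strict Implicit. Unset Printing Implicit Defensive.

Lemma frob2 (F : finFieldType) (i : nat) (x y : F) : (2%N \in [pchar F]) ->
  (x + y) ^+ (2 ^ i) = x ^+ (2 ^ i) + y ^+ (2 ^ i).
Proof.
move=> ch; apply: exprDn_pchar; rewrite pnatX; apply/orP; left.
by rewrite pnatE.
Qed.

Lemma absTrD (F : finFieldType) n (x y : F) : (2%N \in [pchar F]) ->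
  absTr n (x + y) = absTr n x + absTr n y.
Proof.
move=> ch; rewrite /absTr -big_split /=; apply: eq_bigr => i _; exact: frob2.
Qed.

Lemma absTr_sq (F : finFieldType) n (x : F) : (2%N \in [pchar F]) -> #|F| = (2 ^ n)%N ->
  absTr n x ^+ 2 = absTr n x.
Proof.
move=> ch cF.
have fr : forall (u v : F), (u + v) ^+ 2 = u ^+ 2 + v ^+ 2.
  by move=> u v; have := @frob2 F 1 u v ch.
have : forall m, (\sum_(i < m) x ^+ (2 ^ i)) ^+ 2 = \sum_(i < m) x ^+ (2 ^ i.+1).
  elim=> [|m IH]; first by rewrite !big_ord0 expr0n.
  by rewrite !big_ord_recr /= fr IH -exprM expnS mulnC.
move=> h; rewrite /absTr h.
case: n cF => [|n] cF; first by rewrite !big_ord0.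
rewrite big_ord_recr /= big_ord_recl /= -cF expf_card expn0 expr1 addrC.
by congr (_ + _); apply: eq_bigr => i _.
Qed.

Lemma absTr01 (F : finFieldType) n (x : F) : (2%N \in [pchar F]) -> #|F| = (2 ^ n)%N ->
  absTr n x = 0 \/ absTr n x = 1.
Proof.
move=> ch cF; have h := absTr_sq x ch cF.
have : absTr n x * (absTr n x - 1) = 0 by rewrite mulrBr mulr1 -expr2 h subrr.
by move/eqP; rewrite mulf_eq0 subr_eq0 => /orP[/eqP|/eqP]; [left|right].
Qed.

Lemma sgnTrD (F : finFieldType) n (x y : F) : (2%N \in [pchar F]) -> #|F| = (2 ^ n)%N ->
  sgnTr n (x + y) = sgnTr n x * sgnTr n y.
Proof.
move=> ch cF; rewrite /sgnTr absTrD //.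
have h1 : (1 : F) != 0 by exact: oner_neq0.
have h2 : (1 + 1 : F) = 0 by rewrite addrr_pchar2.
case: (absTr01 x ch cF) => ->; case: (absTr01 y ch cF) => ->;
  rewrite ?addr0 ?add0r ?eqxx ?h2 ?eqxx ?(negPf h1) //.
Qed.

Lemma sgnTr0 (F : finFieldType) n : sgnTr n (0 : F) = 1.
Proof.
rewrite /sgnTr /absTr big1 ?eqxx // => i _; rewrite expr0n.
by rewrite expn_eq0.
Qed.

Lemma exists_tr (F : finFieldType) n (f : F -> F) : (2%N \in [pchar F]) -> #|F| = (2 ^ n)%N ->
  odd n -> almost_bent n f -> exists z : F, absTr n z != 0.
Proof.
move=> ch cF on ab.
case: (boolP [exists z : F, absTr n z != 0]) => [/existsP //|/existsPn H].
have n1 : n != 1%N.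
  apply/eqP => n1; have := H 1; rewrite n1 /absTr big_ord1 expn0 expr1 oner_eq0 //.
have := ab 1 0 (oner_neq0 _).
have -> : walsh n f 1 0 = (2 ^ n)%N%:Z.
  rewrite /walsh (eq_bigr (fun _ => 1)); last first.
    by move=> x _; rewrite /sgnTr; have := H (1 * f x + 0 * x); rewrite negbK => ->.
  by rewrite sumr_const -cF -natz.
rewrite !in_cons in_nil orbF; case/orP => [|/orP[]] /eqP.
- by move=> h; move: (expn_gt0 2 n); rewrite -ltz_nat h.
- move=> /eqP; rewrite eqz_nat eqn_exp2l // => /eqP h.
  by move: n1 on h; clear; lia.
- move=> h; have : (0 < (2 ^ n)%N%:Z) by rewrite ltz_nat expn_gt0.
  by rewrite h oppr_gt0 ltNge le0z_nat.
Qed.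

Lemma orth (F : finFieldType) n (z u : F) : (2%N \in [pchar F]) -> #|F| = (2 ^ n)%N ->
  absTr n z != 0 ->
  \sum_(b : F) sgnTr n (b * u) = if u == 0 then (2 ^ n)%N%:Z else 0.
Proof.
move=> ch cF hz; case: eqP => [->|/eqP u0].
  rewrite (eq_bigr (fun _ => 1)); last by move=> b _; rewrite mulr0 sgnTr0.
  by rewrite sumr_const -cF -natz.
set S := \sum_b _.
have hS : S = - S.
  rewrite {1}/S (reindex_inj (addIr (z / u))) /=.
  rewrite (eq_bigr (fun b => sgnTr n (b * u) * (-1))); last first.
    move=> b _; rewrite mulrDl divfK // sgnTrD //; congr (_ * _).
    by rewrite /sgnTr (negPf hz).
  by rewrite -big_distrl /= mulrN1.
by move: hS; clear; lia.
Qed.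

Lemma sum_comp (F : finFieldType) (f : F -> F) (h : F -> int) :
  \sum_(x : F) h (f x) = \sum_(y : F) (omega f y)%:Z * h y.
Proof.
rewrite (partition_big f predT) //=; apply: eq_bigr => y _.
rewrite (eq_bigr (fun _ => h y)); last by move=> x /eqP ->.
rewrite sumr_const /omega -natz mulr_natl; congr (_ *+ _).
by rewrite cardsE.
Qed.

Definition gg (F : finFieldType) (f : F -> F) (y : F) : int := (omega f y)%:Z - 1.
Definition ghat (F : finFieldType) n (f : F -> F) (b : F) : int :=
  \sum_(y : F) gg f y * sgnTr n (b * y).

Lemma sum_gg (F : finFieldType) n (f : F -> F) : #|F| = (2 ^ n)%N ->
  \sum_(y : F) gg f y = 0.
Proof.
move=> cF; rewrite /gg big_split /= sumr_const.
have := sum_comp f (fun _ => 1); rewrite sumr_const.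
under [X in _ = X]eq_bigr do rewrite mulr1.
move=> <-; by rewrite mulNrn subrr.
Qed.

Lemma ghat0 (F : finFieldType) n (f : F -> F) : #|F| = (2 ^ n)%N -> ghat n f 0 = 0.
Proof.
move=> cF; rewrite /ghat (eq_bigr (fun y => gg f y)) ?(sum_gg f cF) // => y _.
by rewrite mul0r sgnTr0 mulr1.
Qed.

Lemma walsh_ghat (F : finFieldType) n (f : F -> F) (z b : F) : (2%N \in [pchar F]) ->
  #|F| = (2 ^ n)%N -> absTr n z != 0 -> b != 0 -> walsh n f b 0 = ghat n f b.
Proof.
move=> ch cF hz b0; rewrite /walsh.
under eq_bigr do rewrite mul0r addr0.
rewrite (sum_comp f (fun y => sgnTr n (b * y))) /ghat /gg.
under [X in _ = X]eq_bigr do rewrite mulrBl mul1r.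
rewrite sumrB.
have -> : \sum_(y : F) sgnTr n (b * y) = 0.
  under eq_bigr do rewrite mulrC.
  by rewrite (orth _ ch cF hz) (negPf b0).
by rewrite subr0.
Qed.

Lemma inversion (F : finFieldType) n (f : F -> F) (z y0 : F) : (2%N \in [pchar F]) ->
  #|F| = (2 ^ n)%N -> absTr n z != 0 ->
  \sum_(b : F) ghat n f b * sgnTr n (b * y0) = (2 ^ n)%N%:Z * gg f y0.
Proof.
move=> ch cF hz; rewrite /ghat.
under eq_bigr do rewrite big_distrl /=.
rewrite exchange_big /=.
rewrite (eq_bigr (fun y => gg f y * (if y == y0 then (2 ^ n)%N%:Z else 0))); last first.
  move=> y _; under eq_bigr do rewrite -mulrA.
  rewrite -big_distrr /=; apply: (congr1 (fun t => gg f y * t)).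
  under eq_bigr do rewrite -sgnTrD // -mulrDr.
  by rewrite (orth _ ch cF hz) addr_eq0 (oppr_pchar2 ch).
rewrite (bigD1 y0) // eqxx big1.
  by change (gg f y0 * (2 ^ n)%N%:Z + 0 = (2 ^ n)%N%:Z * gg f y0); rewrite addr0 mulrC.
by move=> y /andP[_ /negPf ->]; rewrite mulr0.
Qed.

Lemma parseval (F : finFieldType) n (f : F -> F) (z : F) : (2%N \in [pchar F]) ->
  #|F| = (2 ^ n)%N -> absTr n z != 0 ->
  \sum_(b : F) ghat n f b ^+ 2 = (2 ^ n)%N%:Z * \sum_(y : F) gg f y ^+ 2.
Proof.
move=> ch cF hz.
rewrite (eq_bigr (fun b => \sum_(y : F) gg f y * (ghat n f b * sgnTr n (b * y))));
  last first.
  move=> b _; rewrite expr2 {2}/ghat big_distrr /=; apply: eq_bigr => y _.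
  by rewrite mulrCA.
rewrite exchange_big /= big_distrr /=; apply: eq_bigr => y _.
rewrite -big_distrr /= (inversion _ _ ch cF hz).
by rewrite mulrCA expr2.
Qed.

Lemma omega0 (F : finFieldType) (f : F -> F) y : (omega f y == 0%N) = (y \notin imf f).
Proof.
rewrite /omega cards_eq0; apply/idP/idP.
- move=> /eqP h; apply/imsetP => [[x _ hx]].
  have : x \in [set x | f x == y] by rewrite inE hx.
  by rewrite h inE.
- move=> hy; apply/eqP/setP => x; rewrite !inE; apply/negP => /eqP hx.
  by apply: (negP hy); apply/imsetP; exists x.
Qed.

Lemma sum_ind (F : finFieldType) (f : F -> F) :
  \sum_(y : F) ((omega f y == 0%N) : nat)%:Z = (#|~: imf f|)%:Z.
Proof.
rewrite -sum1_card -natz natr_sum [RHS]big_mkcond; apply: eq_bigr => y _.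
by rewrite in_setC -omega0; case: (_ == _).
Qed.

Lemma sq_le (F : finFieldType) n (f : F -> F) (k : nat) : #|F| = (2 ^ n)%N ->
  (forall y, (omega f y <= k)%N) ->
  \sum_(y : F) gg f y ^+ 2 <= k%:Z * (#|~: imf f|)%:Z.
Proof.
move=> cF hk.
have e1 : \sum_(y : F) gg f y ^+ 2 = \sum_(y : F) (gg f y ^+ 2 + gg f y).
  by rewrite big_split /= (sum_gg f cF) addr0.
have e2 : k%:Z * \sum_(y : F) ((omega f y == 0%N) : nat)%:Z =
   \sum_(y : F) k%:Z * (gg f y + ((omega f y == 0%N) : nat)%:Z).
  by rewrite -big_distrr big_split /= (sum_gg f cF) add0r.
rewrite -sum_ind e1 e2.
apply: ler_sum => y _; rewrite /gg.
have := hk y; case: (omega f y) => [|w] hw /=.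
  by rewrite expr2; lia.
rewrite expr2; nia.
Qed.

Lemma norm_sgn (F : finFieldType) n (x : F) : `|sgnTr n x| = 1.
Proof. by rewrite /sgnTr; case: (_ == _); rewrite ?normrN normr1. Qed.
Unset Implicit Arguments.

Theorem theorem7p2 (F : finFieldType) (n : nat) (f : F -> F) :
  (2%N \in [pchar F]) -> #|F| = (2 ^ n)%N -> odd n -> almost_bent n f ->
  let k := (\max_(a : F) omega f a)%N in
  ((#|imf f|)%:R : rat) <= 2%:R ^+ n - (k%:R - 1) / k%:R * 2%:R ^+ ((n + 1) %/ 2)
  /\ (~ injective f -> (#|imf f| <= 2 ^ n - 2 ^ ((n - 1) %/ 2))%N).
Proof.
move=> ch cF on ab k.
have [z hz] := exists_tr ch cF on ab.
set E := (2 ^ ((n + 1) %/ 2))%N.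
set P := (2 ^ n)%N.
set M := #|~: imf f|.
have hE : (E * E = 2 * P)%N.
  rewrite /E /P -expnD -expnS; congr (2 ^ _)%N.
  have := modn2 n; rewrite on; lia.
have hIM : (#|imf f| + M = P)%N by rewrite /M cardsC cF.
have hk : forall y, (omega f y <= k)%N by move=> y; exact: (leq_bigmax y).
have [y0 hy0] : {y0 : F | k = omega f y0}.
  by apply: bigop.eq_bigmax; rewrite cF expn_gt0.
have Ep : (0 < E)%N by rewrite expn_gt0.
have E0 : E%:Z != 0 by lia.
pose c (b : F) : int := ((ghat n f b != 0) : nat)%:Z.
have habs : forall b, ghat n f b \in [:: 0; E%:Z; - E%:Z].
  move=> b; case: (eqVneq b 0) => [->|b0].
    by rewrite ghat0 // in_cons eqxx.
  by rewrite -(walsh_ghat f ch cF hz b0); apply: ab.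
have hsq : forall b, ghat n f b ^+ 2 = (E * E)%N%:Z * c b.
  move=> b; have := habs b; rewrite /c !in_cons in_nil orbF.
  case/orP => [/eqP->|/orP[]/eqP->]; rewrite ?eqxx /= ?mulr0 ?expr0n //.
    by rewrite (negPf E0) /= expr2 PoszM mulr1.
  by rewrite oppr_eq0 (negPf E0) /= sqrrN expr2 PoszM mulr1.
have hnorm : forall b, `|ghat n f b| = E%:Z * c b.
  move=> b; have := habs b; rewrite /c !in_cons in_nil orbF.
  case/orP => [/eqP->|/orP[]/eqP->]; rewrite ?eqxx /= ?mulr0 ?normr0 //.
    by rewrite (negPf E0) /= mulr1.
  by rewrite oppr_eq0 (negPf E0) /= normrN mulr1.
set N := \sum_(b : F) c b.
have hpars : P%:Z * (\sum_(y : F) gg f y ^+ 2) = P%:Z * (2 * N).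
  rewrite -(parseval f ch cF hz) (eq_bigr _ (fun b _ => hsq b)) -big_distrr /= hE.
  by rewrite -/N PoszM -mulrA mulrCA.
have hS : \sum_(y : F) gg f y ^+ 2 = 2 * N.
  by apply: (mulfI _ hpars); rewrite /P; lia.
have hinv : P%:Z * (k%:Z - 1) <= E%:Z * N.
  have -> : P%:Z * (k%:Z - 1) = \sum_(b : F) ghat n f b * sgnTr n (b * y0).
    by rewrite (inversion f y0 ch cF hz) hy0.
  apply: le_trans (ler_norm _) _; apply: le_trans (ler_norm_sum _ _ _) _.
  rewrite /N big_distrr /=; apply: ler_sum => b _.
  by rewrite normrM norm_sgn mulr1 hnorm.
have hC := sq_le cF hk.
rewrite -/M in hC.
have key : ((k - 1) * E <= k * M)%N.
  have h2 : P%:Z * (k%:Z - 1) * E%:Z <= E%:Z * N * E%:Z.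
    by apply: ler_wpM2r => //; lia.
  nia.
have hMP : (M <= P)%N by lia.
have hI : #|imf f| = (P - M)%N by lia.
split.
  rewrite hI natrB // -!natrX -/P -/E lerD2l lerN2.
  case: (posnP k) => [->|kp].
    by rewrite invr0 mulr0 mul0r ler0n.
  rewrite mulrAC ler_pdivrMr ?ltr0n //.
  move: key; rewrite -(ler_nat rat) !natrM natrB; last by lia.
  by rewrite [M%:R * _]mulrC.
move=> ninj.
have k2 : (2 <= k)%N.
  case: (boolP [exists x1 : F, exists x2 : F, (f x1 == f x2) && (x1 != x2)]).
    move=> /existsP[x1 /existsP[x2 /andP[/eqP e12 n12]]].
    apply: leq_trans (hk (f x1)); rewrite /omega.
    apply: (@leq_trans #|[set x1; x2]|); first by rewrite cards2 n12.
    apply: subset_leq_card.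
    by apply/subsetP => x; rewrite !inE => /orP[]/eqP->; rewrite ?e12 eqxx.
  move=> /existsPn H; exfalso; apply: ninj => x1 x2 e12.
  have := H x1; move/existsPn => /(_ x2); rewrite e12 eqxx /= negbK.
  by move/eqP.
have hE2 : E = (2 * 2 ^ ((n - 1) %/ 2))%N.
  rewrite /E -expnS; congr (2 ^ _)%N; have := modn2 n; rewrite on; lia.
move: key; rewrite hE2 => key.
have : (2 ^ ((n - 1) %/ 2) <= M)%N by nia.
lia.
Qed.
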